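(* Let $G$ be a graph with $\mathrm{diam}(G)=3$ such that $D_2(G)$ is connected. Then $2\leqslant \mathrm{diam}(D_2(G))\leqslant 5$. Moreover, both inequalities are sharp: there exist graphs $G$ with $\mathrm{diam}(G)=3$, $D_2(G)$ connected and $\mathrm{diam}(D_2(G))=2$, and there exist graphs $G$ with $\mathrm{diam}(G)=3$, $D_2(G)$ connected and $\mathrm{diam}(D_2(G))=5$.
   Context: All graphs are finite, simple and undirected. For a graph $G$, $\mathrm{d}_G(x,y)$ denotes the length of a shortest path between $x$ and $y$, and $\mathrm{diam}(G)$ is the maximum distance between vertices of $G$. The $2$-distance graph $D_2(G)$ of $G$ is the graph with vertex set $V(G)$ in which two vertices $x,y$ are adjacent if and only if $\mathrm{d}_G(x,y)=2$. *)

(* Defs.v *)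
From mathcomp Require Import all_boot.
Set Implicit Arguments. Unset Strict Implicit. Unset Printing Implicit Defensive.

Definition simple_graph (T : finType) (e : rel T) : Prop :=
  symmetric e /\ irreflexive e.

Definition walkb (T : finType) (e : rel T) (x y : T) (n : nat) : bool :=
  [exists t : n.-tuple T, path e x t && (last x t == y)].

Definition distb (T : finType) (e : rel T) (x y : T) (n : nat) : bool :=
  walkb e x y n && [forall m : 'I_n, ~~ walkb e x y m].

Definition D2 (T : finType) (e : rel T) : rel T :=
  fun x y => distb e x y 2.

Definition graph_connected (T : finType) (e : rel T) : Prop :=
  forall x y : T, connect e x y.

Definition is_diam (T : finType) (e : rel T) (d : nat) : Prop :=
  (forall x y : T, exists2 n, n <= d & walkb e x y n) /\
  (exists x y : T, distb e x y d).

(* Main.v *)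
Require Import Defs.
From mathcomp Require Import all_boot.
From mathcomp Require Import zify.
Set Implicit Arguments. Unset Strict Implicit. Unset Printing Implicit Defensive.
Section Walk.
Variables (T : finType) (e : rel T).

Fixpoint wk (n : nat) (x y : T) : bool :=
  match n with
  | 0 => x == y
  | n'.+1 => [exists z, e x z && wk n' z y]
  end.

Lemma wk_seqP n x y :
  reflect (exists s : seq T, [/\ size s = n, path e x s & last x s = y]) (wk n x y).
Proof.
elim: n x => [|n IH] x /=.
  apply: (iffP eqP) => [->|[s [/size0nil Hs _ <-]]]; first by exists [::].
  by rewrite Hs.
apply: (iffP existsP) => [[z /andP [exz /IH [s [Hs Hp Hl]]]]|[[|z s] [//= [Hs] /andP [exz Hp] Hl]]].
  by exists (z :: s); rewrite /= exz Hp Hs.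
by exists z; rewrite exz; apply/IH; exists s.
Qed.

Lemma walkbE n x y : walkb e x y n = wk n x y.
Proof.
apply/idP/idP.
  case/existsP => t /andP [Hp /eqP Hl]; apply/wk_seqP; exists (val t).
  by rewrite size_tuple.
case/wk_seqP => s [Hs Hp Hl].
have Hs' : size s == n by rewrite Hs.
apply/existsP; exists (Tuple Hs'); by rewrite /= Hp Hl eqxx.
Qed.

Lemma wk_cat m n x y z : wk m x y -> wk n y z -> wk (m + n) x z.
Proof.
elim: m x => [|m IH] x /=; first by move/eqP ->.
case/existsP => u /andP [exu Hu] Hn; apply/existsP; exists u; rewrite exu /=.
exact: IH.
Qed.

Lemma wk_split m n x z : wk (m + n) x z -> exists2 y, wk m x y & wk n y z.
Proof.
elim: m x => [|m IH] x /=; first by move=> H; exists x.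
case/existsP => u /andP [exu /IH [y Hy1 Hy2]]; exists y => //.
by apply/existsP; exists u; rewrite exu.
Qed.

Lemma wk1 x y : wk 1 x y = e x y.
Proof.
apply/existsP/idP => [[z /andP [H /eqP <-]] //|H]; by exists y; rewrite H eqxx.
Qed.

End Walk.
Section Core.
Variables (T : Type) (g : T -> T -> nat).
Hypothesis gsym : forall x y, g x y = g y x.
Hypothesis gtri : forall x y z, g x z <= g x y + g y z.
Hypothesis gle3 : forall x y, g x y <= 3.
Hypothesis gW3 : forall x y, g x y = 3 ->
  exists a b, [/\ g x a = 1, g a b = 1 & g b y = 1].

Definition nc x y := [/\ g x y <> 0, g x y <> 2 & forall w, ~ (g x w = 2 /\ g w y = 2)].

Lemma nc_sym x y : nc x y -> nc y x.
Proof.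
case=> H0 H2 Hw; split; [by rewrite gsym | by rewrite gsym |].
move=> w [A B]; apply: (Hw w); rewrite gsym in A; rewrite gsym in B; by split.
Qed.

Ltac syms l := match l with
  | nil => idtac
  | cons (?a, ?b) ?l' => have := gsym a b; syms l'
  end.

Lemma Mlem p q r : nc p q -> nc q r -> g p q = 1 -> g p r = 3 -> g q r = 3 -> False.
Proof.
case=> _ _ Npq [_ _ Nqr] Hpq Hpr Hqr.
have [a [b [Hpa Hab Hbr]]] := gW3 Hpr.
have := gtri p b r; have := gtri p a b; have := gtri q b r; have := gtri b p q;
have := gtri b a q; have := gtri a p q; have := gtri p a r; have := gtri a b r.
have := Npq b; have := Nqr a.
syms [:: (b,p); (a,p); (q,b); (b,a); (q,a); (b,q); (a,r)].
lia.
Qed.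


Lemma T3 p q r w : nc p q -> nc p r -> nc q r ->
  g p q = 1 -> g p r = 1 -> g q r = 1 -> g w p = 3 -> g w q = 3 -> False.
Proof.
case=> _ _ Npq [_ _ Npr] [_ _ Nqr] Hpq Hpr Hqr Hwp Hwq.
have [P [Q [HwP HPQ HQp]]] := gW3 Hwp.
have := gtri w P p; have := gtri P Q p; have := gtri w P q; have := gtri P p q;
have := gtri P Q q; have := gtri Q p q; have := gtri Q p r; have := gtri Q r q;
have := gtri P Q r; have := gtri P r p; have := gtri P r q.
have := Npq P; have := Nqr Q; have := Npr P.
syms [:: (p,P); (P,p); (q,Q); (Q,q); (Q,p); (r,q); (r,p); (p,q); (Q,r); (P,q)].
lia.
Qed.

Lemma Tlem x y z s t : nc x y -> nc x z -> nc y z ->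
  g x y = 1 -> g x z = 1 -> g y z = 1 -> g s t = 3 -> False.
Proof.
move=> Nxy Nxz Nyz Hxy Hxz Hyz Hst.
have two w : (g w x <= 1 /\ g w y <= 1) \/ (g w x <= 1 /\ g w z <= 1) \/ (g w y <= 1 /\ g w z <= 1).
  have := T3 (w := w) Nxy Nxz Nyz Hxy Hxz Hyz.
  have := T3 (w := w) Nxz Nxy (nc_sym Nyz) Hxz Hxy (etrans (gsym z y) Hyz).
  have := T3 (w := w) Nyz (nc_sym Nxy) (nc_sym Nxz) Hyz (etrans (gsym y x) Hxy) (etrans (gsym z x) Hxz).
  case: Nxy => _ _ Nxy; case: Nxz => _ _ Nxz; case: Nyz => _ _ Nyz.
  have := Nxy w; have := Nxz w; have := Nyz w.
  have := gtri w x y; have := gtri w y x; have := gtri w x z; have := gtri w z x;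
  have := gtri w y z; have := gtri w z y.
  syms [:: (x,w); (y,w); (z,w); (y,x); (z,x); (z,y)].
  have := gle3 w x; have := gle3 w y; have := gle3 w z.
  lia.
have := two s; have := two t.
have := gtri s x t; have := gtri s y t; have := gtri s z t.
syms [:: (x,t); (y,t); (z,t)].
lia.
Qed.

Lemma Alem x y z : g x y = 3 -> g x z = 3 -> nc y z -> nc x z ->
  exists u v, [/\ g x u = 2, g u v = 2 & g v y = 2].
Proof.
move=> Hxy Hxz [_ _ Nyz] [_ _ Nxz].
have [p [q [Hxp Hpq Hqy]]] := gW3 Hxy.
have Hpy : g p y = 2.
  have := gtri x p y; have := gtri p q y; lia.
have Hpz : g p z = 3.
  have := Nyz p; have := gtri x p z; have := gle3 p z; syms [:: (y,p)]; lia.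
have [u [w [Hpu Huw Hwz]]] := gW3 Hpz.
exists w, p; split => //.
  have := gtri x u w; have := gtri x p u; have := gtri x w z; have := gtri p u z;
  have := gtri u w z; have := Nxz u; syms [:: (x,p)]; lia.
have := gtri p w z; have := gtri p u w; syms [:: (w,p)]; lia.
Qed.

Lemma Kcore x y z : nc x y -> nc x z -> nc y z ->
  (forall u v, ~ [/\ g x u = 2, g u v = 2 & g v y = 2]) ->
  (exists s t, g s t = 3) -> False.
Proof.
move=> Nxy Nxz Nyz N3 [s [t Hst]].
have Vxy : g x y = 1 \/ g x y = 3 by case: Nxy => ? ? _; have := gle3 x y; lia.
have Vxz : g x z = 1 \/ g x z = 3 by case: Nxz => ? ? _; have := gle3 x z; lia.
have Vyz : g y z = 1 \/ g y z = 3 by case: Nyz => ? ? _; have := gle3 y z; lia.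
have := gtri x y z; have := gtri x z y; have := gtri y x z; syms [:: (z,y); (y,x)].
case: Vxy => Hxy; case: Vxz => Hxz; case: Vyz => Hyz; try lia; move=> *.
- exact: (Tlem Nxy Nxz Nyz Hxy Hxz Hyz Hst).
- exact: (Mlem Nxy Nyz Hxy Hxz Hyz).
- apply: (Mlem Nxz (nc_sym Nyz) Hxz Hxy); by rewrite gsym.
- have [u [v H]] := Alem Hxy Hxz Nyz Nxz; exact: (N3 u v H).
- have [u [v H]] := Alem Hxy Hxz Nyz Nxz; exact: (N3 u v H).
Qed.

End Core.
Section Graph.
Variables (T : finType) (e : rel T).
Hypotheses (esym : symmetric e) (eirr : irreflexive e).
Hypothesis HD : forall x y : T, exists2 n, n <= 3 & walkb e x y n.

Lemma wk_rev n x y : wk e n x y -> wk e n y x.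
Proof.
elim: n x => [|n IH] x; first by rewrite /= eq_sym.
case/existsP => z /andP [exz /IH Hz]; rewrite -addn1; apply: (wk_cat Hz).
by rewrite wk1 esym.
Qed.

Definition gd x y := if x == y then 0 else if e x y then 1 else if wk e 2 x y then 2 else 3.

Lemma gd_le3 x y : gd x y <= 3.
Proof. by rewrite /gd; case: (x == y); case: (e x y); case: (wk e 2 x y). Qed.

Lemma wk_gd n x y : wk e n x y -> gd x y <= n.
Proof.
case: n => [|[|[|n]]] H.
- by move: H => /= /eqP ->; rewrite /gd eqxx.
- rewrite wk1 in H; rewrite /gd H; by case: (x == y).
- by rewrite /gd H; case: (x == y); case: (e x y).
- exact: leq_trans (gd_le3 x y) _.
Qed.

Lemma gd_wk x y : wk e (gd x y) x y.
Proof.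
rewrite /gd; case: eqP => [->|nxy]; first by rewrite /= eqxx.
case exy: (e x y); first by rewrite wk1.
case w2: (wk e 2 x y) => //.
have [n Hn] := HD x y; rewrite walkbE => Hw.
case: n Hn Hw => [|[|[|[|n]]]] // _ Hw.
- by move: Hw => /= /eqP.
- by rewrite wk1 exy in Hw.
- by rewrite w2 in Hw.
Qed.

Lemma gd_sym x y : gd x y = gd y x.
Proof.
by apply/eqP; rewrite eqn_leq !wk_gd // wk_rev // gd_wk.
Qed.

Lemma gd_tri x y z : gd x z <= gd x y + gd y z.
Proof. exact: wk_gd (wk_cat (gd_wk x y) (gd_wk y z)). Qed.

Lemma gd_e x y : e x y -> gd x y = 1.
Proof.
move=> H; rewrite /gd H; case: eqP => // Exy; by rewrite Exy eirr in H.
Qed.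

Lemma gd_W3 x y : gd x y = 3 -> exists a b, [/\ gd x a = 1, gd a b = 1 & gd b y = 1].
Proof.
move=> H; have := gd_wk x y; rewrite H /=.
case/existsP => a /andP [Ha /existsP [b /andP [Hb]]]; rewrite -/(wk e 1 b y) wk1 => Hc.
by exists a, b; rewrite !gd_e.
Qed.

Lemma gd0 x y : gd x y = 0 -> x = y.
Proof. by rewrite /gd; case: eqP => // _; case: (e x y); case: (wk e 2 x y). Qed.

Lemma distbE n x y : distb e x y n = wk e n x y && [forall m : 'I_n, ~~ wk e m x y].
Proof. by rewrite /distb walkbE; congr andb; apply: eq_forallb => m; rewrite walkbE. Qed.

Lemma distb_gd n x y : distb e x y n -> gd x y = n.
Proof.
rewrite distbE => /andP [W /forallP F]; apply/eqP; rewrite eqn_leq wk_gd // leqNgt.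
apply/negP => Hlt; have := F (Ordinal Hlt); by rewrite gd_wk.
Qed.

Lemma D2gd x y : D2 e x y = (gd x y == 2).
Proof.
rewrite /D2 distbE; apply/idP/idP.
  case/andP => W /forallP F; apply/eqP; have := F ord0; have := F (Ordinal (isT : 1 < 2)).
  rewrite /= -/(wk e 1 x y) wk1 => ne1 ne0.
  by rewrite /gd (negbTE ne0) (negbTE ne1) W.
move=> /eqP H; have W := gd_wk x y; rewrite H in W; rewrite W /=.
apply/forallP => -[[|[|m]] Hm] //=.
  apply/negP => /eqP Exy; by rewrite Exy /gd eqxx in H.
rewrite -/(wk e 1 x y) wk1; apply/negP => Exy; by rewrite gd_e in H.
Qed.

Local Notation D := (D2 e).

Lemma wkD1 x y : gd x y = 2 -> wk D 1 x y.
Proof. by rewrite wk1 D2gd => ->. Qed.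

Lemma wkD2 x w y : gd x w = 2 -> gd w y = 2 -> wk D 2 x y.
Proof. by move=> /wkD1 H1 /wkD1 H2; exact: (wk_cat H1 H2). Qed.

Lemma wkD3 x u v y : gd x u = 2 -> gd u v = 2 -> gd v y = 2 -> wk D 3 x y.
Proof. by move=> /wkD1 H1 H2 H3; exact: (wk_cat H1 (wkD2 H2 H3)). Qed.

Lemma nc_of x y : (forall k, k < 3 -> ~~ wk D k x y) -> nc gd x y.
Proof.
move=> H; split.
- move/gd0 => Exy; have := H 0 isT; by rewrite /= Exy eqxx.
- move/wkD1 => W; have := H 1 isT; by rewrite W.
- move=> w [A B]; have := H 2 isT; by rewrite (wkD2 A B).
Qed.

Hypothesis Hconn : graph_connected D.

Lemma Hex x y : exists n, wk D n x y.
Proof.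
case/connectP: (Hconn x y) => p Hp Hl; exists (size p); apply/wk_seqP; by exists p.
Qed.

Definition dD x y := ex_minn (Hex x y).

Lemma dD_wk x y : wk D (dD x y) x y.
Proof. by rewrite /dD; case: ex_minnP. Qed.

Lemma dD_min x y n : wk D n x y -> dD x y <= n.
Proof. by rewrite /dD; case: ex_minnP => m _ Hm /Hm. Qed.

Hypothesis Hdiam3 : exists s t, gd s t = 3.

Lemma dD_le5 x y : dD x y <= 5.
Proof.
rewrite leqNgt; apply/negP => H6.
have Hw := dD_wk x y.
have E : dD x y = 3 + (dD x y - 3) by lia.
rewrite E in Hw; case: (wk_split Hw) => r W1 W2.
have Nxy : nc gd x y.
  apply: nc_of => k Hk; apply/negP => /dD_min; lia.
have Nxr : nc gd x r.
  apply: nc_of => k Hk; apply/negP => W; have := dD_min (wk_cat W W2); lia.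
have Nyr : nc gd y r.
  apply: nc_sym; first exact: gd_sym.
  apply: nc_of => k Hk; apply/negP => W; have := dD_min (wk_cat W1 W); lia.
apply: (Kcore gd_sym gd_tri gd_le3 gd_W3 Nxy Nxr Nyr _ Hdiam3).
move=> u v [A B C]; have := dD_min (wkD3 A B C); lia.
Qed.

End Graph.

Lemma D2E (T : finType) (e : rel T) x y :
  D2 e x y = [&& wk e 2 x y, x != y & ~~ e x y].
Proof.
rewrite /D2 distbE; congr andb; apply/forallP/andP.
  move=> F; have := F ord0; have := F (Ordinal (isT : 1 < 2)).
  by rewrite /= -/(wk e 1 x y) wk1.
case=> H0 H1 [[|[|m]] Hm] //=.
by rewrite -/(wk e 1 x y) wk1.
Qed.

Lemma eq_wk (T : finType) (r1 r2 : rel T) : r1 =2 r2 -> forall n x y, wk r1 n x y = wk r2 n x y.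
Proof.
move=> E; elim=> [|n IH] x y //=; apply: eq_existsb => z; by rewrite E IH.
Qed.


Fixpoint wkc (T : eqType) (e : rel T) (L : seq T) (n : nat) (x y : T) : bool :=
  match n with
  | 0 => x == y
  | n'.+1 => has (fun z => e x z && wkc e L n' z y) L
  end.

Lemma wkcE (T : finType) (e : rel T) L : (forall x, x \in L) ->
  forall n x y, wkc e L n x y = wk e n x y.
Proof.
move=> HL; elim=> [|n IH] x y //=.
apply/hasP/existsP => [[z _ H]|[z H]]; exists z => //; by rewrite ?IH in H *.
Qed.

Lemma is_diam_c (T : finType) (e : rel T) L d : (forall x, x \in L) ->
  all (fun x => all (fun y => has (fun n => wkc e L n x y) (iota 0 d.+1)) L) L ->
  has (fun x => has (fun y => wkc e L d x y && all (fun m => ~~ wkc e L m x y) (iota 0 d)) L) L ->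
  is_diam e d.
Proof.
move=> HL /allP H1 /hasP [x _ /hasP [y _ /andP [H2 /allP H3]]]; split.
  move=> a b; have /allP /(_ b (HL b)) /hasP [n] := H1 a (HL a).
  rewrite mem_iota add0n ltnS => /andP [_ Hn] W.
  by exists n; rewrite // walkbE -(wkcE e HL).
exists x, y; rewrite distbE -(wkcE e HL) H2 /=; apply/forallP => m.
by rewrite -(wkcE e HL); apply: H3; rewrite mem_iota add0n ltn_ord.
Qed.

Lemma conn_of_diam (T : finType) (e : rel T) d : is_diam e d -> graph_connected e.
Proof.
case=> H _ x y; have [n _] := H x y; rewrite walkbE => /wk_seqP [p [_ Hp Hl]].
by apply/connectP; exists p.
Qed.

Lemma simple_c (T : finType) (e : rel T) L : (forall x, x \in L) ->
  all (fun x => all (fun y => e x y == e y x) L) L -> all (fun x => ~~ e x x) L -> simple_graph e.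
Proof.
move=> HL /allP H1 /allP H2; split.
  by move=> x y; apply/eqP; have /allP := H1 x (HL x); apply.
by move=> x; apply/negbTE/H2.
Qed.

Definition D2c (T : eqType) (e : rel T) L : rel T := fun x y => [&& wkc e L 2 x y, x != y & ~~ e x y].

Lemma D2cE (T : finType) (e : rel T) L : (forall x, x \in L) -> D2 e =2 D2c e L.
Proof. move=> HL x y; by rewrite D2E /D2c (wkcE e HL). Qed.

Lemma is_diam_eq (T : finType) (e1 e2 : rel T) d : e1 =2 e2 -> is_diam e2 d -> is_diam e1 d.
Proof.
move=> E [H1 [x [y H2]]]; split.
  move=> a b; have [n Hn W] := H1 a b; exists n => //; by rewrite walkbE (eq_wk E) -walkbE.
exists x, y; move: H2; rewrite !distbE (eq_wk E); congr andb.
by apply: eq_forallb => m; rewrite (eq_wk E).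
Qed.

Definition mkrel (n : nat) (E : seq (nat * nat)) : rel 'I_n :=
  fun x y => ((val x, val y) \in E) || ((val y, val x) \in E).
Arguments mkrel : clear implicits.

Definition E7 := [:: (0,4); (0,5); (0,6); (1,2); (1,3); (1,6); (2,5); (3,4)].
Definition E6 := [:: (0,1); (0,3); (0,5); (1,2); (1,3); (1,4); (2,3); (2,4)].

Definition L7 : seq 'I_7 := [:: @Ordinal 7 0 isT; @Ordinal 7 1 isT; @Ordinal 7 2 isT;
  @Ordinal 7 3 isT; @Ordinal 7 4 isT; @Ordinal 7 5 isT; @Ordinal 7 6 isT].
Definition L6 : seq 'I_6 := [:: @Ordinal 6 0 isT; @Ordinal 6 1 isT; @Ordinal 6 2 isT;
  @Ordinal 6 3 isT; @Ordinal 6 4 isT; @Ordinal 6 5 isT].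

Lemma HL7 : forall x : 'I_7, x \in L7.
Proof. by case=> [[|[|[|[|[|[|[|m]]]]]]] Hm]. Qed.
Lemma HL6 : forall x : 'I_6, x \in L6.
Proof. by case=> [[|[|[|[|[|[|m]]]]]] Hm]. Qed.

Lemma D2_table (T : finType) (e r : rel T) L : (forall x, x \in L) ->
  all (fun x => all (fun y => D2c e L x y == r x y) L) L -> D2 e =2 r.
Proof.
move=> HL /allP H x y; rewrite (D2cE e HL); apply/eqP.
by have /allP := H x (HL x); apply.
Qed.

Definition E7D2 := [:: (0, 1); (0, 2); (0, 3); (1, 4); (1, 5); (2, 3); (2, 6); (3, 6); (4, 5); (4, 6); (5, 6)].
Definition E6D2 := [:: (0, 2); (0, 4); (1, 5); (3, 4); (3, 5)].

Lemma ex2 : [/\ simple_graph (mkrel 7 E7), is_diam (mkrel 7 E7) 3,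
  graph_connected (D2 (mkrel 7 E7)) & is_diam (D2 (mkrel 7 E7)) 2].
Proof.
have Dt : D2 (mkrel 7 E7) =2 mkrel 7 E7D2 by apply: (D2_table HL7); vm_compute.
have D : is_diam (D2 (mkrel 7 E7)) 2.
  apply: (is_diam_eq Dt); apply: (is_diam_c HL7); by vm_compute.
split => //.
- by apply: (simple_c HL7); vm_compute.
- by apply: (is_diam_c HL7); vm_compute.
- exact: conn_of_diam D.
Qed.

Lemma ex5 : [/\ simple_graph (mkrel 6 E6), is_diam (mkrel 6 E6) 3,
  graph_connected (D2 (mkrel 6 E6)) & is_diam (D2 (mkrel 6 E6)) 5].
Proof.
have Dt : D2 (mkrel 6 E6) =2 mkrel 6 E6D2 by apply: (D2_table HL6); vm_compute.
have D : is_diam (D2 (mkrel 6 E6)) 5.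
  apply: (is_diam_eq Dt); apply: (is_diam_c HL6); by vm_compute.
split => //.
- by apply: (simple_c HL6); vm_compute.
- by apply: (is_diam_c HL6); vm_compute.
- exact: conn_of_diam D.
Qed.

Theorem corollary2p9 :
  (forall (T : finType) (e : rel T),
      simple_graph e -> is_diam e 3 -> graph_connected (D2 e) ->
      exists2 d, is_diam (D2 e) d & 2 <= d <= 5)
  /\ (exists (T : finType) (e : rel T),
        [/\ simple_graph e, is_diam e 3, graph_connected (D2 e) & is_diam (D2 e) 2])
  /\ (exists (T : finType) (e : rel T),
        [/\ simple_graph e, is_diam e 3, graph_connected (D2 e) & is_diam (D2 e) 5]).
Proof.
split; last split; last first.
- by exists ('I_6 : finType), (mkrel 6 E6); exact: ex5.
- by exists ('I_7 : finType), (mkrel 7 E7); exact: ex2.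
move=> T e [esym eirr] [HD [s [t Hst]]] Hconn.
have Hgst0 := distb_gd HD Hst.
have Hgst : gd e s t = 3 by exact: Hgst0.
have Hd3 : exists s t, gd e s t = 3 by exists s, t.
pose dd x y := dD Hconn x y.
have Hle5 x y : dd x y <= 5 by exact: (dD_le5 esym eirr HD Hconn Hd3).
have [p0 Hp0] : {p0 : T * T | \max_(p : T * T) dd p.1 p.2 = dd p0.1 p0.2}.
  by apply: eq_bigmax; apply/card_gt0P; exists (s, t).
exists (\max_(p : T * T) dd p.1 p.2).
  split.
    move=> x y; exists (dd x y); first by have := leq_bigmax (F := fun p : T * T => dd p.1 p.2) (x, y).
    by rewrite walkbE; exact: dD_wk.
  exists p0.1, p0.2; rewrite distbE Hp0 dD_wk /=; apply/forallP => m.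
  apply/negP => W; have := dD_min Hconn W; rewrite leqNgt ltn_ord. by [].
apply/andP; split; last by apply/bigmax_leqP => p _; exact: Hle5.
apply: leq_trans (leq_bigmax (F := fun p : T * T => dd p.1 p.2) (s, t)); rewrite /=.
have W := dD_wk Hconn s t; rewrite -/(dd s t) in W.
case E: (dd s t) W => [|[|k]] W //.
- move: W => /= /eqP Est; by rewrite Est /gd eqxx in Hgst.
- rewrite wk1 (D2gd eirr HD) Hgst in W; by [].
Qed.
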